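(* Consider the nearest-neighbor graph $\mathcal{G}^\mu_{x(k)}$ for a positive integer $\mu$. The maximizing algorithm (in $\mathcal{A}_{\rm max}$) achieves global finite-time consensus within at most $\lceil n/\mu\rceil$ steps: for every initial time $k_0$ and initial value $x^0\in\mathbb{R}^n$, all $x_i(k_0+\lceil n/\mu\rceil)$ are equal.
   Context: Nodes $\mathcal{V}=\{1,\dots,n\}$, $n\ge3$, states $x_i(k)\in\mathbb{R}$, discrete time. The class $\mathcal{A}_{\rm max}$ is the update $x_i(k+1)=\max_{j\in\mathcal{N}_i(k)}x_j(k)$, where $\mathcal{N}_i(k)=\{i\}\cup\mathcal{N}_i^-(k)\cup\mathcal{N}_i^+(k)$. Nearest-neighbor graph $\mathcal{G}^\mu_{x(k)}$: $\mathcal{N}_i^-(k)$ is a set of $\min(\mu,|\{j:x_j(k)<x_i(k)\}|)$ nodes $j$ with $x_j(k)<x_i(k)$ whose values are closest to $x_i(k)$ among such nodes (ties broken arbitrarily), and $\mathcal{N}_i^+(k)$ is defined symmetrically from $\{j: x_j(k)>x_i(k)\}$. $\lceil z\rceil$ is the smallest integer not smaller than $z$. *)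

(* Defs.v *)
(* States are taken in an arbitrary real field R
   (the statement is order-theoretic; R = the reals is an instance). *)
From HB Require Import structures.
From mathcomp Require Import all_boot all_order all_algebra.
Set Implicit Arguments. Unset Strict Implicit. Unset Printing Implicit Defensive.
Import Order.TTheory GRing.Theory Num.Theory.
Local Open Scope ring_scope.

Section NN.
Variables (R : realFieldType) (n : nat).

Definition lower_set (x : 'I_n -> R) (i : 'I_n) : {set 'I_n} :=
  [set j | x j < x i].
Definition upper_set (x : 'I_n -> R) (i : 'I_n) : {set 'I_n} :=
  [set j | x i < x j].

(* S is a valid choice of N_i^-: min(mu, #lower) nodes with smaller value,
   whose values are closest to x_i among such nodes (ties arbitrary). *)
Definition is_lower_nn (mu : nat) (x : 'I_n -> R) (i : 'I_n)
    (S : {set 'I_n}) : Prop :=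
  [/\ S \subset lower_set x i,
      #|S| = minn mu #|lower_set x i|
    & forall j j', j \in S -> j' \in lower_set x i -> j' \notin S ->
        `|x i - x j| <= `|x i - x j'| ].

Definition is_upper_nn (mu : nat) (x : 'I_n -> R) (i : 'I_n)
    (S : {set 'I_n}) : Prop :=
  [/\ S \subset upper_set x i,
      #|S| = minn mu #|upper_set x i|
    & forall j j', j \in S -> j' \in upper_set x i -> j' \notin S ->
        `|x i - x j| <= `|x i - x j'| ].

(* max of x over a finite set N (containing i); the seed x i is
   harmless since i \in N. *)
Definition max_over (x : 'I_n -> R) (i : 'I_n) (N : {set 'I_n}) : R :=
  \big[Num.max/x i]_(j in N) x j.

(* One step of an algorithm in A_max on the graph G^mu_{x(k)}, for some
   admissible tie-breaking choice of the neighbor sets. *)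
Definition max_nn_step (mu : nat) (x x' : 'I_n -> R) : Prop :=
  forall i : 'I_n, exists Nm Np : {set 'I_n},
    [/\ is_lower_nn mu x i Nm, is_upper_nn mu x i Np
      & x' i = max_over x i (i |: (Nm :|: Np))].

End NN.

Definition ceil_div (a b : nat) : nat := (a + b.-1) %/ b.

(* Main.v *)
Require Import Defs.
From HB Require Import structures.
From mathcomp Require Import all_boot all_order all_algebra.
From mathcomp Require Import zify.
Import Order.TTheory GRing.Theory Num.Theory.
Set Implicit Arguments. Unset Strict Implicit.
Local Open Scope ring_scope.

Lemma bigmax_ge (R : realFieldType) (n : nat) (y : 'I_n -> R) (a : R)
  (r : seq 'I_n) (P : pred 'I_n) (j : 'I_n) :
  j \in r -> P j -> y j <= \big[Num.max/a]_(l <- r | P l) y l.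
Proof.
elim: r => //= h t IH; rewrite in_cons big_cons => /orP [/eqP -> | Hj] Pj.
  by rewrite Pj le_max lexx.
case: (P h); last exact: IH.
by rewrite le_max (IH Hj Pj) orbT.
Qed.

Lemma max_over_ge (R : realFieldType) (n : nat) (y : 'I_n -> R) i (N : {set 'I_n}) j :
  j \in N -> y j <= max_over y i N.
Proof. by move=> Hj; rewrite /max_over; apply: bigmax_ge => //; rewrite mem_index_enum. Qed.

Lemma max_over_le (R : realFieldType) (n : nat) (y : 'I_n -> R) i (N : {set 'I_n}) M :
  (forall j, y j <= M) -> max_over y i N <= M.
Proof.
move=> H; rewrite /max_over; apply: (big_ind (fun v => v <= M)) => //.
by move=> u v Hu Hv; rewrite ge_max Hu Hv.
Qed.

Lemma bigmax_wit (R : realFieldType) (n : nat) (y : 'I_n -> R) (i1 : 'I_n)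
  (N : {set 'I_n}) : i1 \in N ->
  exists2 j, j \in N & forall l, l \in N -> y l <= y j.
Proof.
move=> Hi1.
have [j Hj Hv] : exists2 j, j \in N & y j = \big[Num.max/y i1]_(l in N) y l.
  apply: (big_ind (fun v => exists2 j, j \in N & y j = v)).
  - by exists i1.
  - move=> u v [ju Hju <-] [jv Hjv <-].
    case: (leP (y ju) (y jv)) => H.
    + by exists jv => //; rewrite max_r //.
    + by exists ju => //; rewrite max_l // ltW.
  - by move=> l Hl; exists l.
exists j => // l Hl; rewrite Hv; apply: bigmax_ge; rewrite ?mem_index_enum //.
Qed.

Lemma step_self (R : realFieldType) (n mu : nat) (y y' : 'I_n -> R) i :
  max_nn_step mu y y' -> y i <= y' i.
Proof.
move=> /(_ i) [Nm [Np [_ _ ->]]]; apply: max_over_ge; exact: setU11.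
Qed.

Lemma step_le (R : realFieldType) (n mu : nat) (y y' : 'I_n -> R) M :
  max_nn_step mu y y' -> (forall j, y j <= M) -> forall i, y' i <= M.
Proof.
move=> Hs HM i; have [Nm [Np [_ _ ->]]] := Hs i; exact: max_over_le.
Qed.

Lemma step_top (R : realFieldType) (n mu : nat) (y y' : 'I_n -> R) M jm i :
  max_nn_step mu y y' -> (forall j, y j <= M) -> y jm = M -> y i < M ->
  (#|[set j | ((y i < y j) && (y j < M))%R]| < mu)%N -> M <= y' i.
Proof.
move=> Hs HM Hjm Hi Hc.
have [Nm [Np [_ [Hsub Hcard _] ->]]] := Hs i.
case: (pickP [pred j in Np | M <= y j]) => [j /andP [Hj HMj] | Hno].
  apply: (le_trans HMj); apply: max_over_ge.
  by rewrite !inE Hj !orbT.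
exfalso.
set T := [set j | ((y i < y j) && (y j < M))%R] in Hc.
have HNpT : Np \subset T.
  apply/subsetP => j Hj; move/subsetP: Hsub => /(_ j Hj); rewrite !inE => ->.
  by have := Hno j; rewrite /= Hj /= => /negbT; rewrite -ltNge => ->.
have HTU : jm |: T \subset upper_set y i.
  apply/subsetP => j; rewrite !inE => /orP [/eqP -> | /andP [-> _]] //.
  by rewrite Hjm.
have HjmT : jm \notin T by rewrite inE Hjm ltxx andbF.
move: (subset_leq_card HNpT) (subset_leq_card HTU); rewrite cardsU1 HjmT Hcard.
rewrite add1n; move: #|upper_set _ _| #|T| Hc => u t; lia.
Qed.

Lemma step_count (R : realFieldType) (n mu : nat) (y y' : 'I_n -> R) M jm :
  max_nn_step mu y y' -> (forall j, y j <= M) -> y jm = M ->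
  (#|[set j | (y' j < M)%R]| <= #|[set j | (y j < M)%R]| - mu)%N.
Proof.
move=> Hs HM Hjm.
set B' := [set j | (y' j < M)%R]; set B := [set j | (y j < M)%R].
case: (set_0Vmem B') => [-> | [i1 Hi1]]; first by rewrite cards0.
have [i0 Hi0 Hmax] := bigmax_wit y Hi1.
have Hi0' : y' i0 < M by move: Hi0; rewrite inE.
have Hyi0 : y i0 < M := le_lt_trans (step_self i0 Hs) Hi0'.
set T := [set j | ((y i0 < y j) && (y j < M))%R].
have HTmu : (mu <= #|T|)%N.
  rewrite leqNgt; apply/negP => Hlt.
  by have := step_top Hs HM Hjm Hyi0 Hlt; rewrite leNgt Hi0'.
have HB'B : B' \subset B.
  apply/subsetP => j; rewrite !inE => Hj; exact: le_lt_trans (step_self j Hs) Hj.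
have HTB : T \subset B :\: B'.
  apply/subsetP => j; rewrite !inE => /andP [Hij HjM]; rewrite HjM andbT.
  apply/negP => Hj'.
  have := Hmax j; rewrite inE => /(_ Hj') Hle.
  by move: (lt_le_trans Hij Hle); rewrite ltxx.
move: (subset_leq_card HTB); rewrite cardsD (setIidPr HB'B).
move: (subset_leq_card HB'B) HTmu.
move: #|B| #|B'| #|T| => b b' t; lia.
Qed.

Lemma ceil_ok (n mu : nat) : (0 < mu)%N -> (n.-1 <= ceil_div n mu * mu)%N.
Proof.
move=> Hmu; rewrite /ceil_div.
have := divn_eq (n + mu.-1) mu; have := ltn_pmod (n + mu.-1) Hmu.
move: ((n + mu.-1) %/ mu * mu)%N ((n + mu.-1) %% mu)%N => a b; lia.
Qed.

Theorem theorem9 (R : realFieldType) (n mu k0 : nat) (x : nat -> 'I_n -> R) :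
  (3 <= n)%N -> (0 < mu)%N ->
  (forall k : nat, (k0 <= k)%N -> max_nn_step mu (x k) (x k.+1)) ->
  forall i j : 'I_n, x (k0 + ceil_div n mu)%N i = x (k0 + ceil_div n mu)%N j.
Proof.
move=> Hn Hmu Hs.
have n0 : (0 < n)%N by lia.
have [jm _ Hmax] := bigmax_wit (x k0) (in_setT (Ordinal n0)).
set M := x k0 jm.
have Hinv : forall t, [/\ forall j, x (k0 + t)%N j <= M, x (k0 + t)%N jm = M
   & (#|[set j | (x (k0 + t)%N j < M)%R]| <= n.-1 - t * mu)%N].
  elim => [|t [IH1 IH2 IH3]].
  - rewrite addn0; split => //.
    + by move=> j; apply: Hmax; rewrite in_setT.
    + rewrite mul0n subn0; apply: (@leq_trans #|[set~ jm]|); last by rewrite cardsC1 card_ord.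
      apply: subset_leq_card.
      by apply/subsetP => j; rewrite !inE; apply: contraTneq => ->; rewrite ltxx.
  - have Hst : max_nn_step mu (x (k0 + t)%N) (x (k0 + t.+1)%N).
      by rewrite addnS; apply: Hs; rewrite leq_addr.
    split.
    + exact: step_le Hst IH1.
    + apply/le_anti; rewrite (step_le Hst IH1) /=.
      by rewrite -{1}IH2; apply: step_self Hst.
    + have := step_count Hst IH1 IH2; rewrite mulSn.
      move: #|[set j | (x (k0 + t.+1)%N j < M)%R]| #|[set j | (x (k0 + t)%N j < M)%R]| IH3 => a b.
      lia.
have [H1 H2 H3] := Hinv (ceil_div n mu).
have Hall : forall l, x (k0 + ceil_div n mu)%N l = M.
  move=> l; apply/le_anti; rewrite H1 /= leNgt; apply/negP => Hl.
  have : (0 < #|[set j | (x (k0 + ceil_div n mu)%N j < M)%R]|)%N.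
    by apply/card_gt0P; exists l; rewrite inE.
  have := ceil_ok n Hmu; move: H3.
  move: #|[set j | (x (k0 + ceil_div n mu)%N j < M)%R]| => a; lia.
by move=> i j; rewrite !Hall.
Qed.
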